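(* Let $k$ be a field, $M$ a regular matroid of rank $r$ on $E=\{e_1<\cdots<e_n\}$ with basis $B=\{e_{n-r+1},\ldots,e_n\}$ and an admissible signed fundamental cocircuit incidence matrix $(a^*_{ji})$ w.r.t. $B$. Label the circuits $C_1,\ldots,C_m$ of $M$ so that $C_i=\mathrm{ci}(B,e_i)$ for $1\le i\le n-r$. Define $d_j=j$ for $j\le n-r$ and $d_j=\min\{i: e_i\in\mathrm{coc}(B,e_j)\}$ for $j\ge n-r+1$, and set $m_{C_i}=x_i^{|\overline{C}_i|}$ if $i\le n-r$ and $m_{C_i}=\prod_{e_j\in\overline{C}_i}x_{d_j}$ if $i\ge n-r+1$. Let $p_C$ be the polynomial obtained from $\prod_{e_j\in\overline{C}}x_j$ by substituting, for every $j\ge n-r+1$, $x_j=-(a^*_{jj})^{-1}\sum_{e_i\in\mathrm{coc}(B,e_j),\,i\ne j}a^*_{ji}x_i$. Then for every circuit $C$ of $M$, the monomial $m_C$ occurs (up to sign) as a term of $p_C$.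
   Context: For $e\notin B$, $\mathrm{ci}(B,e)$ is the unique circuit contained in $B\cup\{e\}$; for $b\in B$, $\mathrm{coc}(B,b)$ is the unique cocircuit contained in $(E\setminus B)\cup\{b\}$ and containing $b$. $\overline{C}=C\setminus\{\min C\}$. The fundamental cocircuit incidence matrix has rows indexed by $\mathrm{coc}(B,e_j)$, $e_j\in B$, columns by $e_1,\ldots,e_n$, with $0/1$ incidence entries. A signing replaces some $1$'s by $-1$; it is admissible over $k$ if it is the restriction of a signing of the full cocircuit incidence matrix for which some signing of the full circuit incidence matrix satisfies $\widetilde{\mathcal{A}}_M(\mathcal{C})\widetilde{\mathcal{A}}_M(\mathcal{C}^* )^T=0$ over $k$. *)

(* Defs.v *)
From mathcomp Require Import all_boot all_order all_algebra.
From mathcomp Require Import mpoly.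
Set Implicit Arguments. Unset Strict Implicit. Unset Printing Implicit Defensive.
Import GRing.Theory.
Local Open Scope ring_scope.

(* ground set E = 'I_n, e_{i+1} <-> i, ordered by the natural order on 'I_n *)
Section Matroid.
Variable n : nat.
Implicit Types (Cs : {set {set 'I_n}}) (S B D C : {set 'I_n}).

Definition matroid_circuits Cs : Prop :=
  [/\ set0 \notin Cs,
      {in Cs &, forall C1 C2, C1 \subset C2 -> C1 = C2} &
      {in Cs &, forall C1 C2 e, C1 != C2 -> e \in C1 :&: C2 ->
         exists2 C3, C3 \in Cs & C3 \subset (C1 :|: C2) :\ e}].

Definition mindep Cs S : bool := [forall C in Cs, ~~ (C \subset S)].

Definition mbasis Cs S : bool :=
  mindep Cs S && [forall e, (e \notin S) ==> ~~ mindep Cs (e |: S)].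

Definition meets_all_bases Cs D : bool :=
  [forall S : {set 'I_n}, mbasis Cs S ==> (D :&: S != set0)].

Definition cocircuits Cs : {set {set 'I_n}} :=
  [set D | meets_all_bases Cs D &&
           [forall D' : {set 'I_n}, (D' \proper D) ==> ~~ meets_all_bases Cs D']].

Definition fund_circuit Cs B (e : 'I_n) : {set 'I_n} :=
  odflt set0 [pick C in Cs | C \subset e |: B].

Definition fund_cocircuit Cs B (b : 'I_n) : {set 'I_n} :=
  odflt set0 [pick D in cocircuits Cs | (b \in D) && (D \subset b |: ~: B)].

Definition Cbar C : {set 'I_n} :=
  [set e in C | [exists e', (e' \in C) && (e' < e)%N]].

Definition representable_over (F : fieldType) Cs : Prop :=
  exists (m : nat) (A : 'M[F]_(m, n)), forall S,
    mindep Cs S <->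
    \rank (\matrix_(i, j) (if j \in S then A i j else 0)) = #|S|.

Definition regular_matroid Cs : Prop := forall F : fieldType, representable_over F Cs.

Definition signing (k : fieldType) (X : {set {set 'I_n}})
   (sg : {set 'I_n} -> 'I_n -> k) : Prop :=
  forall D, D \in X -> forall e,
    (e \in D -> sg D e = 1 \/ sg D e = -1) /\ (e \notin D -> sg D e = 0).

Definition admissible (k : fieldType) Cs B (a : 'I_n -> 'I_n -> k) : Prop :=
  exists (sg sgs : {set 'I_n} -> 'I_n -> k),
    [/\ signing (cocircuits Cs) sgs, signing Cs sg,
        (forall C D, C \in Cs -> D \in cocircuits Cs ->
            \sum_(e < n) sg C e * sgs D e = 0) &
        (forall j i, j \in B -> a j i = sgs (fund_cocircuit Cs B j) i)].

Definition didx Cs B (j : 'I_n) : 'I_n :=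
  if j \in B then [arg min_(i < j in fund_cocircuit Cs B j) (i : nat)] else j.

Definition mC Cs B C : 'X_{1..n} :=
  match [pick i | (i \notin B) && (C \subset i |: B)] with
  | Some i => (U_(i) *+ #|Cbar C|)%MM
  | None => (\sum_(j in Cbar C) U_(didx Cs B j))%MM
  end.

Definition subst_var (k : fieldType) Cs B (a : 'I_n -> 'I_n -> k) (j : 'I_n)
  : {mpoly k[n]} :=
  if j \in B then
    - (a j j)^-1 *: \sum_(i in fund_cocircuit Cs B j | i != j) a j i *: 'X_i
  else 'X_j.

Definition pC (k : fieldType) Cs B (a : 'I_n -> 'I_n -> k) C : {mpoly k[n]} :=
  \prod_(j in Cbar C) subst_var Cs B a j.
End Matroid.

(* Main.v *)
Require Import Defs.
From mathcomp Require Import all_boot all_order all_algebra.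
From mathcomp Require Import mpoly.
From mathcomp Require Import zify.
Import GRing.Theory.
Local Open Scope ring_scope.
Set Implicit Arguments. Unset Strict Implicit. Unset Printing Implicit Defensive.

Definition wt (n : nat) (w : 'I_n -> nat) (m : 'X_{1..n}) : nat :=
  (\sum_(i < n) m i * w i)%N.

Lemma wtD n w (m1 m2 : 'X_{1..n}) : wt w (m1 + m2)%MM = (wt w m1 + wt w m2)%N.
Proof. by rewrite /wt -big_split; apply: eq_bigr => i _; rewrite mnmDE mulnDl. Qed.

Lemma wt0 n w : wt w (0%MM : 'X_{1..n}) = 0%N.
Proof. by rewrite /wt big1 // => i _; rewrite mnm0E. Qed.

Lemma wtU n w (i : 'I_n) : wt w U_(i)%MM = w i.
Proof.
rewrite /wt (bigD1 i) //= mnm1E eqxx mul1n big1 ?addn0 // => j /negbTE.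
by rewrite mnm1E eq_sym => ->.
Qed.

Lemma wt_sum n w (r : seq 'I_n) (t : 'I_n -> 'I_n) :
  wt w (\sum_(j <- r) U_(t j))%MM = (\sum_(j <- r) w (t j))%N.
Proof.
elim: r => [|x r IH]; first by rewrite !big_nil wt0.
by rewrite !big_cons wtD wtU IH.
Qed.

Definition sbnd (k : fieldType) n (w : 'I_n -> nat) (b : nat) (p : {mpoly k[n]}) :=
  forall m, p@_m != 0 -> (wt w m < b)%N.

Lemma coefM0 (k : fieldType) n (p q : {mpoly k[n]}) m :
  (forall m1 m2, m = (m1 + m2)%MM -> p@_m1 != 0 -> q@_m2 != 0 -> False) ->
  (p * q)@_m = 0.
Proof.
move=> H; rewrite mcoeffM big1 // => kk /eqP E.
case: (boolP (p@_kk.1 == 0)) => [/eqP->|h1]; first by rewrite mul0r.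
case: (boolP (q@_kk.2 == 0)) => [/eqP->|h2]; first by rewrite mulr0.
by exfalso; apply: H h1 h2.
Qed.

Lemma sbndM_gen (k : fieldType) n w b (p q : {mpoly k[n]}) :
  (forall m1 m2, p@_m1 != 0 -> q@_m2 != 0 -> (wt w m1 + wt w m2 < b)%N) ->
  sbnd w b (p * q).
Proof.
move=> H m hm; rewrite ltnNge; apply/negP => hge; move/eqP: hm; apply.
apply: coefM0 => m1 m2 E h1 h2; have := H _ _ h1 h2; rewrite -wtD -E; lia.
Qed.

Lemma sbndD (k : fieldType) n w b (p q : {mpoly k[n]}) :
  sbnd w b p -> sbnd w b q -> sbnd w b (p + q).
Proof.
move=> hp hq m; rewrite mcoeffD => h.
case: (boolP (p@_m == 0)) => [/eqP e|]; last exact: hp.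
by apply: hq; move: h; rewrite e add0r.
Qed.

Lemma sbnd0 (k : fieldType) n w b : sbnd w b (0 : {mpoly k[n]}).
Proof. by move=> m; rewrite mcoeff0 eqxx. Qed.

Lemma sbndZ (k : fieldType) n w b c (p : {mpoly k[n]}) :
  sbnd w b p -> sbnd w b (c *: p).
Proof.
move=> hp m; rewrite mcoeffZ => h; apply: hp; apply: contraNneq h => ->.
by rewrite mulr0.
Qed.

Lemma sbndX (k : fieldType) n w b (i : 'I_n) :
  (w i < b)%N -> sbnd w b ('X_i : {mpoly k[n]}).
Proof.
move=> hi m; rewrite mcoeffX; case: (U_(i)%MM =P m) => [<- _|]; first by rewrite wtU.
by move=> _; rewrite eqxx.
Qed.

Lemma sbndM (k : fieldType) n w a b (p q : {mpoly k[n]}) :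
  sbnd w a p -> sbnd w b q -> sbnd w (a + b) (p * q).
Proof.
move=> hp hq; apply: sbndM_gen => m1 m2 h1 h2.
have := hp _ h1; have := hq _ h2; lia.
Qed.

Lemma sbndXM (k : fieldType) n w b c (M : 'X_{1..n}) (q : {mpoly k[n]}) :
  sbnd w b q -> sbnd w (wt w M + b) (c *: 'X_[M] * q).
Proof.
move=> hq; apply: sbndM_gen => m1 m2 h1 h2.
move: h1; rewrite mcoeffZ mcoeffX; case: (M =P m1) => [<- _|]; last by rewrite mulr0 eqxx.
by rewrite ltn_add2l; apply: hq.
Qed.

Definition pm1 (k : fieldType) (x : k) := x = 1 \/ x = -1.

Lemma pm1M (k : fieldType) (x y : k) : pm1 x -> pm1 y -> pm1 (x * y).
Proof.
by case=> ->; case=> ->; rewrite ?mulr1 ?mulrN1 ?opprK; [left|right|right|left].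
Qed.

Lemma prod_lin (k : fieldType) n (r : seq 'I_n) (L : 'I_n -> {mpoly k[n]})
   (t : 'I_n -> 'I_n) w :
  (forall j, j \in r -> exists c R, [/\ L j = c *: 'X_(t j) + R,
        sbnd w (w (t j)) R & pm1 c]) ->
  exists al Q, [/\ \prod_(j <- r) L j = al *: 'X_[\sum_(j <- r) U_(t j)] + Q,
        sbnd w (\sum_(j <- r) w (t j))%N Q & pm1 al].
Proof.
elim: r => [|x r IH] H.
  exists 1, 0; rewrite !big_nil scale1r addr0 mpolyX0; split => //; last by left.
  exact: sbnd0.
have [al [Q [e1 h1 h2]]] := IH (fun j hj => H j ltac:(by rewrite inE hj orbT)).
have [c [R [e3 h3 h4]]] := H x (mem_head _ _).
exists (c * al), (c *: 'X_(t x) * Q + R * (al *: 'X_[\sum_(j <- r) U_(t j)]) + R * Q).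
rewrite !big_cons e1 e3; split; last exact: pm1M.
- by rewrite mpolyXD mulrDl !mulrDr -!scalerAl -!scalerAr !scalerA -!addrA.
- apply: sbndD; first apply: sbndD.
  + have := sbndXM (c:=c) (M:=U_(t x)%MM) h1; rewrite wtU.
    by move=> h m hm; apply: h.
  + apply: sbndM_gen => m1 m2 hm1 hm2.
    move: hm2; rewrite mcoeffZ mcoeffX; case: (\sum_(j <- r) U_(t j) =P m2)%MM => [<- _|]; last by rewrite mulr0 eqxx.
    by rewrite wt_sum; have := h3 _ hm1; lia.
  + exact: sbndM h3 h1.
Qed.

Lemma coef_lin (k : fieldType) n w (al : k) (M : 'X_{1..n}) (Q : {mpoly k[n]}) :
  sbnd w (wt w M) Q -> (al *: 'X_[M] + Q)@_M = al.
Proof.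
move=> hQ; rewrite mcoeffD mcoeffZ mcoeffX eqxx mulr1.
case: (boolP (Q@_M == 0)) => [/eqP ->|h]; first by rewrite addr0.
by have := hQ _ h; rewrite ltnn.
Qed.

Lemma mindep_sub n (Cs : {set {set 'I_n}}) (S T : {set 'I_n}) :
  S \subset T -> mindep Cs T -> mindep Cs S.
Proof.
move=> ST /forallP H; apply/forallP => C; apply/implyP => hC.
have := H C; rewrite hC /=; apply: contra => CS; exact: subset_trans CS ST.
Qed.

Lemma fc_exists n (Cs : {set {set 'I_n}}) (B : {set 'I_n}) (j : 'I_n) :
  mbasis Cs B -> j \in B ->
  exists D, [/\ D \in cocircuits Cs, j \in D & D \subset j |: ~: B].
Proof.
move=> hB jB; set D0 := j |: ~: B.
have HD0 : meets_all_bases Cs D0.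
  apply/forallP => S; apply/implyP => /andP [hS /forallP hmax].
  apply/negP => /eqP hI.
  have jS : j \notin S.
    apply/negP => jS; have : j \in D0 :&: S by rewrite inE jS setU11.
    by rewrite hI inE.
  have SB : S \subset B.
    apply/subsetP => x xS; apply/negPn/negP => xB.
    have : x \in D0 :&: S by rewrite inE xS /D0 !inE xB orbT.
    by rewrite hI inE.
  have := hmax j; rewrite jS /=; apply/negP/negPn.
  apply: mindep_sub (proj1 (andP hB)); by rewrite subUset sub1set jB SB.
have [D /minsetP [HD Hmin] DD0] := minset_exists HD0.
exists D; split => //.
- rewrite inE HD /=; apply/forallP => D'; apply/implyP => hp.
  apply/negP => HD'; have E := Hmin D' HD' (proper_sub hp).
  by rewrite E properxx in hp.
- move/forallP: HD => /(_ B); rewrite hB /= => /set0Pn [x /setIP [xD xB]].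
  have := subsetP DD0 x xD; rewrite !inE xB orbF => /eqP <-; exact: xD.
Qed.

Lemma fc_spec n (Cs : {set {set 'I_n}}) (B : {set 'I_n}) (j : 'I_n) :
  mbasis Cs B -> j \in B ->
  [/\ fund_cocircuit Cs B j \in cocircuits Cs, j \in fund_cocircuit Cs B j &
      fund_cocircuit Cs B j \subset j |: ~: B].
Proof.
move=> hB jB; rewrite /fund_cocircuit; case: pickP => [D /andP [HD /andP [jD sub]] | H] //=.
have [D [HD jD sub]] := fc_exists hB jB.
by have := H D; rewrite HD jD sub.
Qed.

Lemma orth1 (k : fieldType) n (Cs : {set {set 'I_n}}) (sg sgs : {set 'I_n} -> 'I_n -> k)
  (C D : {set 'I_n}) (x : 'I_n) :
  signing (cocircuits Cs) sgs -> signing Cs sg ->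
  (forall C D, C \in Cs -> D \in cocircuits Cs -> \sum_(e < n) sg C e * sgs D e = 0) ->
  C \in Cs -> D \in cocircuits Cs -> x \in C -> x \in D ->
  (forall e, e \in C -> e \in D -> e = x) -> False.
Proof.
move=> hsgs hsg horth hC hD xC xD hx.
have := horth C D hC hD; rewrite (bigD1 x) //= big1 ?addr0.
- have h1 := proj1 (hsg C hC x) xC; have h2 := proj1 (hsgs D hD x) xD.
  have := pm1M h1 h2; case=> ->; apply/eqP; by rewrite ?oppr_eq0 oner_eq0.
- move=> e ne; case: (boolP (e \in C)) => eC; last by rewrite (proj2 (hsg C hC e) eC) mul0r.
  case: (boolP (e \in D)) => eD; last by rewrite (proj2 (hsgs D hD e) eD) mulr0.
  by rewrite (hx e eC eD) eqxx in ne.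
Qed.

Lemma pm1_inv (k : fieldType) (x : k) : pm1 x -> pm1 (- x^-1).
Proof. by case=> ->; rewrite ?invr1 ?invrN1 ?opprK; [right|left]. Qed.

Lemma subst_dec (k : fieldType) n (Cs : {set {set 'I_n}}) (B : {set 'I_n})
   (a : 'I_n -> 'I_n -> k) (j t : 'I_n) (w : 'I_n -> nat) :
  j \in B -> pm1 (a j j) -> pm1 (a j t) -> t \in fund_cocircuit Cs B j -> t != j ->
  (forall i, i \in fund_cocircuit Cs B j -> i != j -> i != t -> (w i < w t)%N) ->
  exists c R, [/\ subst_var Cs B a j = c *: 'X_t + R, sbnd w (w t) R & pm1 c].
Proof.
move=> jB hjj hjt tD tj H; rewrite /subst_var jB (bigD1 t) /=; last by rewrite tD tj.
rewrite scalerDr scalerA; eexists; eexists; split; first reflexivity.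
- apply: sbndZ; apply: big_ind => [|p q|i /andP [/andP [iD ij] it]].
  + exact: sbnd0.
  + exact: sbndD.
  + by apply: sbndZ; apply: sbndX; apply: H.
- exact: pm1M (pm1_inv hjj) hjt.
Qed.

Unset Implicit Arguments.
Set Strict Implicit.

Theorem lemma4p2 (k : fieldType) (n r : nat) (Cs : {set {set 'I_n}})
    (a : 'I_n -> 'I_n -> k) :
  let B : {set 'I_n} := [set i : 'I_n | (n - r <= i)%N] in
  matroid_circuits Cs -> regular_matroid Cs -> (r <= n)%N ->
  mbasis Cs B -> admissible Cs B a ->
  forall C : {set 'I_n}, C \in Cs ->
    (pC Cs B a C)@_(mC Cs B C) = 1 \/ (pC Cs B a C)@_(mC Cs B C) = -1.
Proof.
move=> B _ _ hrn hB [sg [sgs [hsgs hsg horth ha]]] C hC.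
have inB : forall i : 'I_n, (i \in B) = (n - r <= i)%N by move=> i; rewrite inE.
have aP : forall j i, j \in B -> i \in fund_cocircuit Cs B j -> pm1 (a j i).
  move=> j i jB iD; rewrite ha //; have [HD _ _] := fc_spec hB jB.
  exact: proj1 (hsgs _ HD i) iD.
have fcB : forall j i, j \in B -> i \in fund_cocircuit Cs B j -> i != j -> i \notin B.
  move=> j i jB iD ij; have [_ _ sub] := fc_spec hB jB.
  by move: (subsetP sub i iD); rewrite !inE (negbTE ij).
suff [t [w [-> H]]] : exists (t : 'I_n -> 'I_n) (w : 'I_n -> nat),
   mC Cs B C = (\sum_(j in Cbar C) U_(t j))%MM /\
   forall j, j \in Cbar C -> exists c R,
     [/\ subst_var Cs B a j = c *: 'X_(t j) + R, sbnd w (w (t j)) R & pm1 c].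
  have [al [Q [e hQ hal]]] := prod_lin (r := enum (Cbar C)) (L := subst_var Cs B a)
     (t := t) (w := w) (fun j hj => H j ltac:(by rewrite mem_enum in hj)).
  have eP : pC Cs B a C = \prod_(j <- enum (Cbar C)) subst_var Cs B a j.
    by rewrite /pC big_enum.
  have eS : (\sum_(j in Cbar C) U_(t j))%MM = (\sum_(j <- enum (Cbar C)) U_(t j))%MM.
    by rewrite big_enum.
  rewrite eP eS e (coef_lin (w:=w)); first exact: hal.
  by rewrite wt_sum.
rewrite /mC; case: pickP => [i0 /andP [i0B Csub] | hnone].
- exists (fun _ => i0), (fun i => nat_of_bool (i == i0)); split.
    by apply/mnmP => i; rewrite mulmnE mnm_sumE sum_nat_const mulnC.
  move=> j; rewrite inE => /andP [jC /existsP [e' /andP [e'C e'j]]].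
  have jB : j \in B.
    apply/negPn/negP => jB.
    move: (subsetP Csub j jC); rewrite !inE -inB (negbTE jB) orbF => /eqP ej.
    move: (subsetP Csub e' e'C); rewrite !inE -ej.
    case/orP => [/eqP E|]; first by rewrite E ltnn in e'j.
    by move: jB; rewrite inB; lia.
  have ji0 : i0 != j by apply: contraNneq i0B => ->.
  have [HD jD sub] := fc_spec hB jB.
  have i0D : i0 \in fund_cocircuit Cs B j.
    apply/negPn/negP => i0D.
    apply: (orth1 hsgs hsg horth hC HD jC jD) => e eC eD.
    apply/eqP/negPn/negP => ej.
    have := fcB j e jB eD ej; move: (subsetP Csub e eC); rewrite in_setU1.
    case/orP => [/eqP E|->] //; by move=> _; move: i0D; rewrite -E eD.
  apply: subst_dec => //; first exact: aP; first exact: aP.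
  by move=> i iD ij ii0; rewrite eqxx (negbTE ii0).
- exists (didx Cs B), (fun i : 'I_n => (n - i)%N); split => //.
  move=> j; rewrite inE => /andP [jC _].
  case: (boolP (j \in B)) => jB; last first.
    rewrite /subst_var /didx (negbTE jB); exists 1, 0; rewrite scale1r addr0.
    split => //; [exact: sbnd0 | by left].
  have [HD jD sub] := fc_spec hB jB.
  have [i iD ij] : exists2 i, i \in fund_cocircuit Cs B j & i != j.
    case: (boolP [exists i in fund_cocircuit Cs B j, i != j]).
      by case/existsP => i /andP [iD ij]; exists i.
    move/existsPn => hall; exfalso.
    apply: (orth1 hsgs hsg horth hC HD jC jD) => e eC eD.
    by have := hall e; rewrite eD /= negbK => /eqP.
  rewrite /didx jB; case: arg_minnP => //= t tD tmin.
  have tj : t != j.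
    have := tmin i iD; have := fcB j i jB iD ij; rewrite inB.
    have := ltn_ord i; move: (jB); rewrite inB => jb.
    move=> _ hi ht; apply/negP => /eqP E; move: hi ht jb; rewrite E; lia.
  apply: subst_dec => //; first exact: aP; first exact: aP.
  move=> i' i'D _ i't; have := tmin i' i'D; have := ltn_ord i'.
  move: i't; rewrite -(inj_eq val_inj) /=; lia.
Qed.
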